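(* Let $N=\{1,2,\dots,n\}$ be a set of players and let $v:2^N\to\mathbb{R}$ be a monotonic characteristic function. Let $x=(x_1,\dots,x_n)$ be a payoff vector, where the players are indexed so that $x_1\le x_2\le\dots\le x_n$. Then $x$ is stable if and only if for every $i\in\{1,\dots,n\}$, $$x_i \;\ge\; v\Big(\bigcup_{j\le i}\{j\}\Big)=v(\{1,2,\dots,i\}).$$
   Context: A characteristic function $v:2^N\to\mathbb{R}$ assigns to each coalition $C\subseteq N$ the value $v(C)$ (e.g. the value of the model learnt from the pooled data of the players in $C$). It is monotonic if $C\subseteq C'$ implies $v(C)\le v(C')$. In this (modified) cooperative game, when the grand coalition $N$ forms, a payoff vector is a vector $x=(x_1,\dots,x_n)\in\mathbb{R}^n$ with $x_i\le v(N)$ for every player $i$ (each player individually receives at most the value created by the coalition; the sum of payoffs is not restricted). A payoff vector $x$ is stable if for every nonempty coalition $C\subseteq N$ there exists a player $k\in C$ with $x_k\ge v(C)$. *)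

(* Defs.v *)
(* Players N = {1..n} are rendered as 'I_n = {0..n-1}. *)
From mathcomp Require Import all_boot all_order all_algebra.
Set Implicit Arguments. Unset Strict Implicit. Unset Printing Implicit Defensive.
Import Order.TTheory GRing.Theory Num.Theory.
Local Open Scope ring_scope.

Definition monotonic (R : realDomainType) (n : nat) (v : {set 'I_n} -> R) : Prop :=
  forall C C' : {set 'I_n}, C \subset C' -> v C <= v C'.

(* payoff vector of the modified game: every x_i <= v(N). *)
Definition payoff_vector (R : realDomainType) (n : nat) (v : {set 'I_n} -> R)
  (x : 'I_n -> R) : Prop :=
  forall i : 'I_n, x i <= v [set: 'I_n].

Definition stable (R : realDomainType) (n : nat) (v : {set 'I_n} -> R)
  (x : 'I_n -> R) : Prop :=
  forall C : {set 'I_n}, C != set0 -> exists2 k, k \in C & v C <= x k.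

(* Main.v *)
Require Import Defs.
From mathcomp Require Import all_boot all_order all_algebra.
Import Order.TTheory GRing.Theory Num.Theory.
Local Open Scope ring_scope.

Theorem proposition5 (R : realDomainType) (n : nat) (v : {set 'I_n} -> R)
  (x : 'I_n -> R) :
  monotonic v ->
  payoff_vector v x ->
  (forall i j : 'I_n, (i <= j)%N -> x i <= x j) ->
  (stable v x <-> forall i : 'I_n, v [set j : 'I_n | (j <= i)%N] <= x i).
Proof.
move=> mon _ xmon; split.
- move=> st i.
  have ne : [set j : 'I_n | (j <= i)%N] != set0.
    by apply/set0Pn; exists i; rewrite inE.
  have [k kin le] := st _ ne.
  apply: (le_trans le); apply: xmon; by rewrite inE in kin.
- move=> H C /set0Pn [i0 i0C].
  case: (arg_maxnP (fun k : 'I_n => nat_of_ord k) i0C) => k kC kmax.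
  exists k => //.
  apply: le_trans (H k).
  apply: mon; apply/subsetP => j jC; rewrite inE; exact: kmax.
Qed.
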